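(* Let $a,b,p,q$ be positive real numbers and consider the system of difference equations $$y_{n+1}=\frac{a z_n}{p+z_n}e^{-y_n},\qquad z_{n+1}=\frac{b y_n}{q+y_n}e^{-z_n},\qquad n=0,1,2,\dots$$ with nonnegative initial values. (i) If $\frac{a}{p}<1$ and $\frac{b}{q}<1$, then the equilibrium $(0,0)$ is locally asymptotically stable. (ii) Suppose $ab>pq$, so that the system has a unique positive equilibrium $(\bar y,\bar z)$. Define $$y^*=\frac{ab-pq}{p+b},\quad z^*=\frac{ab-pq}{q+a},\quad y_*=\frac{ab\,e^{-(y^*+z^* )}-pq}{b e^{-z^*}+p},\quad z_*=\frac{ab\,e^{-(y^*+z^* )}-pq}{a e^{-y^*}+q}.$$ If $e^{y_*}>a$ and $e^{z_*}>b$, then $(\bar y,\bar z)$ is locally asymptotically stable.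
   Context: An equilibrium $(\bar y,\bar z)$ satisfies $\bar y=\frac{a\bar z}{p+\bar z}e^{-\bar y}$, $\bar z=\frac{b\bar y}{q+\bar y}e^{-\bar z}$. It is locally stable if for every $\varepsilon>0$ there is $\delta>0$ such that $|y_0-\bar y|+|z_0-\bar z|<\delta$ implies $|y_n-\bar y|+|z_n-\bar z|<\varepsilon$ for all $n\ge0$; it is locally asymptotically stable if it is locally stable and there is $\gamma>0$ such that $|y_0-\bar y|+|z_0-\bar z|<\gamma$ implies $y_n\to\bar y$, $z_n\to\bar z$. *)

(* Defs.v *)
From Stdlib Require Import Reals.
Open Scope R_scope.

Definition step (a b p q : R) (s : R * R) : R * R :=
  let (y, z) := s in
  (a * z / (p + z) * exp (- y), b * y / (q + y) * exp (- z)).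

Fixpoint sol (a b p q y0 z0 : R) (n : nat) : R * R :=
  match n with
  | O => (y0, z0)
  | S k => step a b p q (sol a b p q y0 z0 k)
  end.

Definition is_equilibrium (a b p q yb zb : R) : Prop :=
  yb = a * zb / (p + zb) * exp (- yb) /\ zb = b * yb / (q + yb) * exp (- zb).

(* Local stability, for the system with nonnegative initial values. *)
Definition locally_stable (a b p q yb zb : R) : Prop :=
  forall eps, eps > 0 -> exists delta, delta > 0 /\
    forall y0 z0, 0 <= y0 -> 0 <= z0 ->
      Rabs (y0 - yb) + Rabs (z0 - zb) < delta ->
      forall n, Rabs (fst (sol a b p q y0 z0 n) - yb)
              + Rabs (snd (sol a b p q y0 z0 n) - zb) < eps.

Definition locally_asymptotically_stable (a b p q yb zb : R) : Prop :=
  locally_stable a b p q yb zb /\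
  exists gamma, gamma > 0 /\
    forall y0 z0, 0 <= y0 -> 0 <= z0 ->
      Rabs (y0 - yb) + Rabs (z0 - zb) < gamma ->
      Un_cv (fun n => fst (sol a b p q y0 z0 n)) yb /\
      Un_cv (fun n => snd (sol a b p q y0 z0 n)) zb.

(* Main.v *)
Require Import Defs.
From Stdlib Require Import Reals Lra.
Open Scope R_scope.

Lemma exp_mono (x y : R) : x <= y -> exp x <= exp y.
Proof. intros [h|h]; [left; apply exp_increasing; exact h | subst; lra]. Qed.

Lemma expm1_bound (d : R) : Rabs (exp (-d) - 1) <= Rabs d * exp (Rabs d).
Proof.
  assert (H1 := exp_ineq1_le (-d)). assert (H2 := exp_ineq1_le d).
  assert (E : exp d * exp (-d) = 1). { rewrite <- exp_plus. replace (d + -d) with 0 by ring. apply exp_0. }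
  assert (P1 := exp_pos d). assert (P2 := exp_pos (-d)).
  destruct (Rle_dec 0 d) as [h|h].
  - rewrite (Rabs_right d) by lra.
    assert (exp (-d) <= 1) by (rewrite <- exp_0; apply exp_mono; lra).
    assert (1 <= exp d) by (rewrite <- exp_0; apply exp_mono; lra).
    rewrite Rabs_left1 by lra. nra.
  - rewrite (Rabs_left d) by lra.
    assert (1 <= exp (-d)) by (rewrite <- exp_0; apply exp_mono; lra).
    rewrite Rabs_right by lra. nra.
Qed.

Lemma coord (a p Y Z y z r m : R) : 0 < a -> 0 < p -> 0 < Y -> 0 < Z ->
  Y = a * Z / (p + Z) * exp (- Y) -> 0 <= m -> m <= r -> r < 1 ->
  Rabs (y - Y) <= Y * m -> Rabs (z - Z) <= Z * m ->
  Rabs (a * z / (p + z) * exp (- y) - Y)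
    <= Y * m * (p * exp (Y * r) / (p + Z * (1 - r)) + Y * exp (Y * r)).
Proof.
  intros ha hp hY hZ hE hm hmr hr hy hz.
  assert (hz' : Z * (1 - r) <= z).
  { assert (Z - z <= Rabs (z - Z)) by (rewrite <- Rabs_Ropp; replace (-(z-Z)) with (Z-z) by ring; apply RRle_abs). nra. }
  assert (hZr : 0 < Z * (1 - r)) by nra.
  set (d := y - Y). set (E := exp (- Y)). set (D := exp (- d)).
  assert (hEy : exp (- y) = E * D).
  { unfold E, D, d. rewrite <- exp_plus. f_equal. ring. }
  assert (Id : a * z / (p + z) * exp (- y) - Y =
    (a * Z / (p + Z) * E) * p * (z - Z) / (Z * (p + z)) * D
    + (a * Z / (p + Z) * E) * (D - 1)).
  { rewrite hEy. rewrite hE at 1. fold E. field. lra. }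
  assert (hE2 : a * Z / (p + Z) * E = Y) by (unfold E; symmetry; exact hE).
  rewrite hE2 in Id. rewrite Id.
  assert (hd : Rabs d <= Y * r). { unfold d. nra. }
  assert (hD : Rabs (D - 1) <= Y * m * exp (Y * r)).
  { unfold D. eapply Rle_trans. apply expm1_bound.
    apply Rmult_le_compat. apply Rabs_pos. left; apply exp_pos. exact hy.
    apply exp_mono. exact hd. }
  assert (hD2 : D <= exp (Y * r)).
  { unfold D. apply exp_mono. assert (- d <= Rabs d) by (rewrite <- Rabs_Ropp; apply RRle_abs). lra. }
  assert (hD0 : 0 < D) by apply exp_pos.
  eapply Rle_trans. apply Rabs_triang.
  rewrite Rabs_mult. rewrite (Rabs_mult Y). rewrite (Rabs_right Y) by lra.
  rewrite (Rabs_right D) by lra.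
  assert (T1 : Rabs (Y * p * (z - Z) / (Z * (p + z))) <= Y * p * m / (p + Z * (1 - r))).
  { unfold Rdiv. rewrite Rabs_mult. rewrite Rabs_mult. rewrite Rabs_inv.
    rewrite (Rabs_right (Y * p)) by nra.
    rewrite (Rabs_right (Z * (p + z))) by nra.
    assert (Rabs (z - Z) * (p + Z * (1 - r)) <= Z * m * (p + z)) by (apply Rmult_le_compat; [apply Rabs_pos | lra | exact hz | lra]).
    apply Rmult_le_reg_r with (Z * (p + z) * (p + Z * (1 - r))). { apply Rmult_lt_0_compat; [apply Rmult_lt_0_compat|]; lra. }
    replace (Y * p * Rabs (z - Z) * / (Z * (p + z)) * (Z * (p + z) * (p + Z * (1 - r))))
      with (Y * p * (Rabs (z - Z) * (p + Z * (1 - r)))) by (field; nra).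
    replace (Y * p * m * / (p + Z * (1 - r)) * (Z * (p + z) * (p + Z * (1 - r))))
      with (Y * p * (Z * m * (p + z))) by (field; nra).
    apply Rmult_le_compat_l; nra. }
  assert (0 <= Y * p * m / (p + Z * (1 - r))).
  { apply Rmult_le_pos. apply Rmult_le_pos; [apply Rmult_le_pos|]; lra. left; apply Rinv_0_lt_compat; lra. }
  assert (Rabs (Y * p * (z - Z) / (Z * (p + z))) * D <= Y * p * m / (p + Z * (1 - r)) * exp (Y * r)).
  { apply Rmult_le_compat; try lra. apply Rabs_pos. }
  assert (Y * Rabs (D - 1) <= Y * (Y * m * exp (Y * r))) by (apply Rmult_le_compat_l; lra).
  replace (Y * m * (p * exp (Y * r) / (p + Z * (1 - r)) + Y * exp (Y * r)))
    with (Y * p * m / (p + Z * (1 - r)) * exp (Y * r) + Y * (Y * m * exp (Y * r))) by (field; lra).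
  lra.
Qed.
Lemma phi_small (c Y Z : R) : 0 < c -> 0 < Y -> 0 < Z -> c/(c+Z) + Y < 1 ->
  exists r k, 0 < r /\ r < 1 /\ 0 <= k /\ k < 1 /\
    forall s, 0 < s <= r -> c * exp (Y*s) / (c + Z*(1-s)) + Y * exp (Y*s) <= k.
Proof.
  intros hc hY hZ h.
  set (f := fun r => c * exp (Y*r) / (c + Z*(1-r)) + Y * exp (Y*r)).
  assert (hf0 : f 0 = c/(c+Z) + Y).
  { unfold f. rewrite Rmult_0_r, exp_0. f_equal; [f_equal; ring | ring]. }
  assert (hc0 : continuity_pt f 0).
  { unfold f. reg. nra. }
  destruct (hc0 ((1 - f 0)/2)) as [alp [halp H]]. lra.
  set (r := Rmin (alp/2) (1/2)).
  assert (hr0 : 0 < r) by (unfold r; apply Rmin_pos; lra).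
  assert (hr1 : r <= 1/2) by (unfold r; apply Rmin_r).
  assert (hr2 : r <= alp/2) by (unfold r; apply Rmin_l).
  exists r, ((1 + f 0)/2). repeat split; try lra.
  - assert (0 <= f 0). { rewrite hf0. assert (0 < c/(c+Z)) by (apply Rdiv_lt_0_compat; lra). lra. }
    lra.
  - intros s hs. assert (Hr := H s). simpl in Hr. unfold R_dist in Hr.
    assert (Rabs (f s - f 0) < (1 - f 0)/2).
    { apply Hr. split. split. exact I. lra. rewrite Rminus_0_r, Rabs_right; lra. }
    apply Rabs_def2 in H0. fold (f s). lra.
Qed.

Lemma sol_S_fst a b p q y0 z0 n :
  fst (sol a b p q y0 z0 (S n)) =
  a * snd (sol a b p q y0 z0 n) / (p + snd (sol a b p q y0 z0 n)) * exp (- fst (sol a b p q y0 z0 n)).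
Proof. simpl. destruct (sol a b p q y0 z0 n); reflexivity. Qed.

Lemma sol_S_snd a b p q y0 z0 n :
  snd (sol a b p q y0 z0 (S n)) =
  b * fst (sol a b p q y0 z0 n) / (q + fst (sol a b p q y0 z0 n)) * exp (- snd (sol a b p q y0 z0 n)).
Proof. simpl. destruct (sol a b p q y0 z0 n); reflexivity. Qed.

Lemma pow_le1 (c : R) (n : nat) : 0 <= c -> c <= 1 -> 0 <= c ^ n <= 1.
Proof.
  intros h0 h1. induction n as [|n IH]; simpl. lra.
  split. apply Rmult_le_pos; lra. nra.
Qed.

Lemma geom_cv (u : nat -> R) (l K c : R) : 0 <= K -> 0 <= c -> c < 1 ->
  (forall n, Rabs (u n - l) <= K * c ^ n) -> Un_cv u l.
Proof.
  intros hK hc0 hc1 H eps heps.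
  destruct (pow_lt_1_zero c ltac:(rewrite Rabs_right; lra) (eps / (K + 1))) as [N HN].
  { apply Rdiv_lt_0_compat; lra. }
  exists N. intros n hn. unfold R_dist.
  specialize (HN n hn). rewrite Rabs_right in HN by (apply Rle_ge, pow_le1; lra).
  assert (K * c ^ n <= K * (eps / (K+1))) by (apply Rmult_le_compat_l; lra).
  assert (K * (eps / (K+1)) < eps).
  { apply Rmult_lt_reg_r with (K+1). lra. field_simplify; lra. }
  specialize (H n). lra.
Qed.

Lemma step_le (a p y z : R) : 0 < a -> 0 < p -> 0 <= y -> 0 <= z ->
  0 <= a * z / (p + z) * exp (- y) <= a / p * z.
Proof.
  intros ha hp hy hz.
  assert (exp (- y) <= 1) by (rewrite <- exp_0; apply exp_mono; lra).
  assert (0 < exp (- y)) by apply exp_pos.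
  assert (0 <= a * z / (p + z)) by (apply Rmult_le_pos; [nra | left; apply Rinv_0_lt_compat; lra]).
  assert (a * z / (p + z) <= a / p * z).
  { apply Rmult_le_reg_r with (p * (p + z)). nra.
    replace (a * z / (p + z) * (p * (p + z))) with (a * z * p) by (field; lra).
    replace (a / p * z * (p * (p + z))) with (a * z * (p + z)) by (field; lra). nra. }
  split. apply Rmult_le_pos; lra. nra.
Qed.

Lemma part1 (a b p q : R) : 0 < a -> 0 < b -> 0 < p -> 0 < q -> a / p < 1 -> b / q < 1 ->
  locally_asymptotically_stable a b p q 0 0.
Proof.
  intros ha hb hp hq h1 h2.
  set (c := Rmax (a/p) (b/q)).
  assert (hc1 : c < 1) by (unfold c; apply Rmax_lub_lt; lra).
  assert (hc0 : 0 <= c).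
  { unfold c. eapply Rle_trans; [|apply Rmax_l]. left; apply Rdiv_lt_0_compat; lra. }
  assert (hcA : a / p <= c) by apply Rmax_l.
  assert (hcB : b / q <= c) by apply Rmax_r.
  assert (Key : forall y0 z0, 0 <= y0 -> 0 <= z0 -> forall n,
     0 <= fst (sol a b p q y0 z0 n) /\ 0 <= snd (sol a b p q y0 z0 n) /\
     fst (sol a b p q y0 z0 n) + snd (sol a b p q y0 z0 n) <= c ^ n * (y0 + z0)).
  { intros y0 z0 hy hz n. induction n as [|n [IH1 [IH2 IH3]]].
    - simpl. lra.
    - rewrite sol_S_fst, sol_S_snd.
      destruct (step_le a p (fst (sol a b p q y0 z0 n)) (snd (sol a b p q y0 z0 n))) as [A1 A2]; auto.
      destruct (step_le b q (snd (sol a b p q y0 z0 n)) (fst (sol a b p q y0 z0 n))) as [B1 B2]; auto.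
      split; [lra|split; [lra|]].
      simpl.
      assert (a / p * snd (sol a b p q y0 z0 n) <= c * snd (sol a b p q y0 z0 n)) by (apply Rmult_le_compat_r; lra).
      assert (b / q * fst (sol a b p q y0 z0 n) <= c * fst (sol a b p q y0 z0 n)) by (apply Rmult_le_compat_r; lra).
      assert (c * (fst (sol a b p q y0 z0 n) + snd (sol a b p q y0 z0 n)) <= c * (c ^ n * (y0 + z0))) by (apply Rmult_le_compat_l; lra).
      lra. }
  split.
  - intros eps heps. exists eps. split. lra.
    intros y0 z0 hy hz hd n.
    destruct (Key y0 z0 hy hz n) as [K1 [K2 K3]].
    rewrite !Rminus_0_r in *. rewrite Rabs_right in * by lra. rewrite Rabs_right in * by lra.
    try rewrite (Rabs_right y0) in hd by lra; try rewrite (Rabs_right z0) in hd by lra.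
    destruct (pow_le1 c n hc0 ltac:(lra)).
    assert (c ^ n * (y0 + z0) <= 1 * (y0 + z0)) by (apply Rmult_le_compat_r; lra). lra.
  - exists 1. split. lra. intros y0 z0 hy hz _.
    split; apply geom_cv with (K := y0 + z0) (c := c); try lra; intro n;
      destruct (Key y0 z0 hy hz n) as [K1 [K2 K3]]; rewrite Rminus_0_r; rewrite Rabs_right by lra; lra.
Qed.

Lemma core2 (a b p q Y Z : R) : 0 < a -> 0 < b -> 0 < p -> 0 < q -> 0 < Y -> 0 < Z ->
  is_equilibrium a b p q Y Z -> Y * (p + Z) < Z -> Z * (q + Y) < Y ->
  locally_asymptotically_stable a b p q Y Z.
Proof.
  intros ha hb hp hq hY hZ [E1 E2] H1 H2.
  destruct (phi_small p Y Z hp hY hZ) as [r1 [k1 [hr1 [hr1' [hk1 [hk1' P1]]]]]].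
  { assert (Y < Z / (p + Z)) by (apply Rmult_lt_reg_r with (p + Z); [lra| field_simplify; lra]).
    replace (p / (p + Z)) with (1 - Z / (p + Z)) by (field; lra). lra. }
  destruct (phi_small q Z Y hq hZ hY) as [r2 [k2 [hr2 [hr2' [hk2 [hk2' P2]]]]]].
  { assert (Z < Y / (q + Y)) by (apply Rmult_lt_reg_r with (q + Y); [lra| field_simplify; lra]).
    replace (q / (q + Y)) with (1 - Y / (q + Y)) by (field; lra). lra. }
  set (r := Rmin r1 r2). set (k := Rmax k1 k2).
  assert (hr : 0 < r) by (unfold r; apply Rmin_pos; lra).
  assert (hra : r <= r1) by apply Rmin_l. assert (hrb : r <= r2) by apply Rmin_r.
  assert (hka : k1 <= k) by apply Rmax_l. assert (hkb : k2 <= k) by apply Rmax_r.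
  assert (hk1'' : k < 1) by (unfold k; apply Rmax_lub_lt; lra).
  assert (P1' := P1 r ltac:(lra)). assert (P2' := P2 r ltac:(lra)).
  assert (Key : forall y0 z0 m0, 0 <= m0 -> m0 <= r ->
    Rabs (y0 - Y) <= Y * m0 -> Rabs (z0 - Z) <= Z * m0 -> forall n,
    Rabs (fst (sol a b p q y0 z0 n) - Y) <= Y * (m0 * k ^ n) /\
    Rabs (snd (sol a b p q y0 z0 n) - Z) <= Z * (m0 * k ^ n)).
  { intros y0 z0 m0 hm0 hm0r hy0 hz0 n. induction n as [|n [IH1 IH2]].
    - simpl. rewrite !Rmult_1_r. lra.
    - destruct (pow_le1 k n) as [Q1 Q2]; try lra.
      assert (m0 * k ^ n <= m0 * 1) by (apply Rmult_le_compat_l; lra).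
      assert (0 <= m0 * k ^ n) by (apply Rmult_le_pos; lra).
      rewrite sol_S_fst, sol_S_snd. split.
      + eapply Rle_trans. apply (coord a p Y Z _ _ r (m0 * k ^ n)); auto; try lra.
        replace (Y * (m0 * k ^ S n)) with (Y * (m0 * k ^ n) * k) by (simpl; ring).
        apply Rmult_le_compat_l. apply Rmult_le_pos; lra. lra.
      + eapply Rle_trans. apply (coord b q Z Y _ _ r (m0 * k ^ n)); auto; try lra.
        replace (Z * (m0 * k ^ S n)) with (Z * (m0 * k ^ n) * k) by (simpl; ring).
        apply Rmult_le_compat_l. apply Rmult_le_pos; lra. lra. }
  set (mn := Rmin Y Z).
  assert (hmn : 0 < mn) by (unfold mn; apply Rmin_pos; lra).
  assert (hmY : mn <= Y) by apply Rmin_l. assert (hmZ : mn <= Z) by apply Rmin_r.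
  assert (Init : forall y0 z0, Rabs (y0 - Y) <= Y * ((Rabs (y0 - Y) + Rabs (z0 - Z)) / mn) /\
                               Rabs (z0 - Z) <= Z * ((Rabs (y0 - Y) + Rabs (z0 - Z)) / mn)).
  { intros y0 z0. assert (A := Rabs_pos (y0 - Y)). assert (B := Rabs_pos (z0 - Z)).
    assert (Rabs (y0 - Y) + Rabs (z0 - Z) <= Y * ((Rabs (y0 - Y) + Rabs (z0 - Z)) / mn)).
    { apply Rmult_le_reg_r with mn. lra. field_simplify; try lra. nra. }
    assert (Rabs (y0 - Y) + Rabs (z0 - Z) <= Z * ((Rabs (y0 - Y) + Rabs (z0 - Z)) / mn)).
    { apply Rmult_le_reg_r with mn. lra. field_simplify; try lra. nra. }
    lra. }
  split.
  - intros eps heps. exists (mn * Rmin r (eps / (Y + Z))). split.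
    { apply Rmult_lt_0_compat. lra. apply Rmin_pos. lra. apply Rdiv_lt_0_compat; lra. }
    intros y0 z0 _ _ hd n.
    set (m0 := (Rabs (y0 - Y) + Rabs (z0 - Z)) / mn).
    assert (hm0 : 0 <= m0) by (unfold m0; apply Rmult_le_pos; [assert (A := Rabs_pos (y0 - Y)); assert (B := Rabs_pos (z0 - Z)); lra | left; apply Rinv_0_lt_compat; lra]).
    assert (hm1 : m0 < Rmin r (eps / (Y + Z))).
    { unfold m0. apply Rmult_lt_reg_r with mn. lra. field_simplify; lra. }
    assert (Rmin r (eps / (Y + Z)) <= r) by apply Rmin_l.
    assert (Rmin r (eps / (Y + Z)) <= eps / (Y + Z)) by apply Rmin_r.
    destruct (Init y0 z0) as [I1 I2]. fold m0 in I1, I2.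
    destruct (Key y0 z0 m0 hm0 ltac:(lra) I1 I2 n) as [K1 K2].
    destruct (pow_le1 k n) as [Q1 Q2]; try lra.
    assert (m0 * k ^ n <= m0) by nra.
    assert ((Y + Z) * m0 < eps).
    { assert (HH : (Y + Z) * m0 < (Y + Z) * (eps / (Y + Z))) by (apply Rmult_lt_compat_l; lra).
      replace ((Y + Z) * (eps / (Y + Z))) with eps in HH by (field; lra). lra. }
    nra.
  - exists (mn * r). split. nra.
    intros y0 z0 _ _ hd.
    set (m0 := (Rabs (y0 - Y) + Rabs (z0 - Z)) / mn).
    assert (hm0 : 0 <= m0) by (unfold m0; apply Rmult_le_pos; [assert (A := Rabs_pos (y0 - Y)); assert (B := Rabs_pos (z0 - Z)); lra | left; apply Rinv_0_lt_compat; lra]).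
    assert (hm1 : m0 < r).
    { unfold m0. apply Rmult_lt_reg_r with mn. lra. field_simplify; lra. }
    destruct (Init y0 z0) as [I1 I2]. fold m0 in I1, I2.
    assert (0 <= k) by lra.
    split.
    + apply geom_cv with (K := Y * m0) (c := k); try nra.
      intro n. destruct (Key y0 z0 m0 hm0 ltac:(lra) I1 I2 n) as [K1 K2]. rewrite Rmult_assoc. exact K1.
    + apply geom_cv with (K := Z * m0) (c := k); try nra.
      intro n. destruct (Key y0 z0 m0 hm0 ltac:(lra) I1 I2 n) as [K1 K2]. rewrite Rmult_assoc. exact K2.
Qed.

Lemma upper (A B P Q U V : R) : 0 < A -> 0 < B -> 0 < P -> 0 < Q -> 0 < U -> 0 < V ->
  U * (P + V) <= A * V -> V * (Q + U) <= B * U -> P * Q + (P + B) * U <= A * B.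
Proof.
  intros hA hB hP hQ hU hV h1 h2.
  assert (hAU : 0 < A - U) by nra.
  assert (U * P * (Q + U) <= V * (A - U) * (Q + U)) by nra.
  assert (V * (Q + U) * (A - U) <= B * U * (A - U)) by nra.
  assert (U * (P * (Q + U)) <= U * (B * (A - U))) by nra.
  assert (P * (Q + U) <= B * (A - U)) by (apply Rmult_le_reg_l with U; lra).
  nra.
Qed.

Lemma lower (A B P Q U V : R) : 0 < A -> 0 < B -> 0 < P -> 0 < Q -> 0 < U -> 0 < V ->
  A * V <= U * (P + V) -> B * U <= V * (Q + U) -> A * B - P * Q <= (P + B) * U.
Proof.
  intros hA hB hP hQ hU hV h1 h2.
  destruct (Rle_dec A U) as [h|h]. nra.
  assert (hAU : 0 < A - U) by lra.
  assert (V * (A - U) * (Q + U) <= U * P * (Q + U)) by nra.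
  assert (B * U * (A - U) <= V * (Q + U) * (A - U)) by nra.
  assert (U * (B * (A - U)) <= U * (P * (Q + U))) by nra.
  assert (B * (A - U) <= P * (Q + U)) by (apply Rmult_le_reg_l with U; lra).
  nra.
Qed.

Lemma eq_form (a p Y Z : R) : 0 < p -> 0 < Z -> Y = a * Z / (p + Z) * exp (- Y) ->
  Y * (p + Z) * exp Y = a * Z.
Proof.
  intros hp hZ E. assert (X : exp (- Y) * exp Y = 1).
  { rewrite <- exp_plus. replace (- Y + Y) with 0 by ring. apply exp_0. }
  rewrite E at 1. field_simplify; [|lra]. rewrite Rmult_assoc, X. field.
Qed.

Lemma bounds (a b p q Y Z : R) : 0 < a -> 0 < b -> 0 < p -> 0 < q -> 0 < Y -> 0 < Z ->
  is_equilibrium a b p q Y Z ->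
  let ys := (a * b - p * q) / (p + b) in
  let zs := (a * b - p * q) / (q + a) in
  let yl := (a * b * exp (- (ys + zs)) - p * q) / (b * exp (- zs) + p) in
  let zl := (a * b * exp (- (ys + zs)) - p * q) / (a * exp (- ys) + q) in
  exp yl > a -> exp zl > b -> Y * (p + Z) < Z /\ Z * (q + Y) < Y.
Proof.
  intros ha hb hp hq hY hZ [E1 E2] ys zs yl zl Hy Hz.
  assert (F1 := eq_form a p Y Z hp hZ E1).
  assert (F2 := eq_form b q Z Y hq hY E2).
  assert (eY : 1 <= exp Y) by (rewrite <- exp_0; apply exp_mono; lra).
  assert (eZ : 1 <= exp Z) by (rewrite <- exp_0; apply exp_mono; lra).
  assert (U1 : Y * (p + Z) <= a * Z).
  { assert (Y * (p + Z) * 1 <= Y * (p + Z) * exp Y) by (apply Rmult_le_compat_l; nra). lra. }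
  assert (U2 : Z * (q + Y) <= b * Y).
  { assert (Z * (q + Y) * 1 <= Z * (q + Y) * exp Z) by (apply Rmult_le_compat_l; nra). lra. }
  assert (hys : Y <= ys).
  { unfold ys. apply Rmult_le_reg_r with (p + b). lra. field_simplify; try lra.
    assert (H := upper a b p q Y Z ha hb hp hq hY hZ U1 U2). lra. }
  assert (hzs : Z <= zs).
  { unfold zs. apply Rmult_le_reg_r with (q + a). lra. field_simplify; try lra.
    assert (H := upper b a q p Z Y hb ha hq hp hZ hY U2 U1). lra. }
  set (A' := a * exp (- ys)). set (B' := b * exp (- zs)).
  assert (hA' : 0 < A') by (unfold A'; apply Rmult_lt_0_compat; [lra | apply exp_pos]).
  assert (hB' : 0 < B') by (unfold B'; apply Rmult_lt_0_compat; [lra | apply exp_pos]).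
  assert (X1 : exp ys * exp (- ys) = 1).
  { rewrite <- exp_plus. replace (ys + - ys) with 0 by ring. apply exp_0. }
  assert (X2 : exp zs * exp (- zs) = 1).
  { rewrite <- exp_plus. replace (zs + - zs) with 0 by ring. apply exp_0. }
  assert (L1 : A' * Z <= Y * (p + Z)).
  { unfold A'. assert (exp Y <= exp ys) by (apply exp_mono; lra).
    assert (0 < exp (- ys)) by apply exp_pos.
    assert (a * Z * exp (- ys) * exp Y <= a * Z * exp (-ys) * exp ys).
    { apply Rmult_le_compat_l; [|lra]. apply Rmult_le_pos; [apply Rmult_le_pos|]; lra. }
    assert (0 < exp Y) by apply exp_pos.
    apply Rmult_le_reg_r with (exp Y). lra.
    replace (a * Z * exp (-ys) * exp ys) with (a * Z) in H1 by (rewrite Rmult_assoc, (Rmult_comm (exp (- ys))), X1; ring).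
    lra. }
  assert (L2 : B' * Y <= Z * (q + Y)).
  { unfold B'. assert (exp Z <= exp zs) by (apply exp_mono; lra).
    assert (0 < exp (- zs)) by apply exp_pos.
    assert (b * Y * exp (- zs) * exp Z <= b * Y * exp (-zs) * exp zs).
    { apply Rmult_le_compat_l; [|lra]. apply Rmult_le_pos; [apply Rmult_le_pos|]; lra. }
    assert (0 < exp Z) by apply exp_pos.
    apply Rmult_le_reg_r with (exp Z). lra.
    replace (b * Y * exp (-zs) * exp zs) with (b * Y) in H1 by (rewrite Rmult_assoc, (Rmult_comm (exp (- zs))), X2; ring).
    lra. }
  assert (Eab : a * b * exp (- (ys + zs)) = A' * B').
  { unfold A', B'. rewrite Ropp_plus_distr, exp_plus. ring. }
  assert (hyl : yl <= Y).
  { unfold yl. rewrite Eab. fold B'. apply Rmult_le_reg_r with (B' + p). lra.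
    field_simplify; try lra. assert (H := lower A' B' p q Y Z hA' hB' hp hq hY hZ L1 L2). lra. }
  assert (hzl : zl <= Z).
  { unfold zl. rewrite Eab. fold A'. apply Rmult_le_reg_r with (A' + q). lra.
    field_simplify; try lra. assert (H := lower B' A' q p Z Y hB' hA' hq hp hZ hY L2 L1). lra. }
  assert (exp yl <= exp Y) by (apply exp_mono; lra).
  assert (exp zl <= exp Z) by (apply exp_mono; lra).
  split; nra.
Qed.

Theorem theorem3p2 (a b p q : R) (ha : 0 < a) (hb : 0 < b) (hp : 0 < p) (hq : 0 < q) :
  (a / p < 1 -> b / q < 1 -> locally_asymptotically_stable a b p q 0 0) /\
  (a * b > p * q ->
   let ys := (a * b - p * q) / (p + b) in
   let zs := (a * b - p * q) / (q + a) in
   let yl := (a * b * exp (- (ys + zs)) - p * q) / (b * exp (- zs) + p) in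
   let zl := (a * b * exp (- (ys + zs)) - p * q) / (a * exp (- ys) + q) in
   exp yl > a -> exp zl > b ->
   forall yb zb, 0 < yb -> 0 < zb -> is_equilibrium a b p q yb zb ->
     locally_asymptotically_stable a b p q yb zb).
Proof.
  split.
  - intros h1 h2. apply part1; assumption.
  - intros _ ys zs yl zl Hy Hz yb zb hy hz E.
    destruct (bounds a b p q yb zb ha hb hp hq hy hz E Hy Hz) as [B1 B2].
    apply core2; assumption.
Qed.
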